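(* Let $t\ge1$ and $n=2t^2+2t+1$. Let $\mathcal{C}_0\subseteq\mathbb{Z}_n^2$ be a linear $t$-error-correcting perfect code with generator matrix $G=[a~~b]$, and let $\mathcal{C}=\mathbf{x}+\mathcal{C}_0$ for some $\mathbf{x}=(x_1,x_2)\in\mathbb{Z}_n^2$. Let $\mathcal{S}$ be the set of perfect Sudoku grids with respect to $\mathcal{C}$, $\bar{\mathcal{S}}$ the set of equivalence classes of $\mathcal{S}$ under relabeling, and \[ \mathcal{G}_\mathcal{S}=\langle \tau_2^{x_1+x_2+1}\tau_1^{x_1-x_2}r,\ \tau_1^a\tau_2^b\rangle. \] Then every orbit (equivalence class) of the induced action of $\mathcal{G}_\mathcal{S}$ on $\bar{\mathcal{S}}$ has size dividing $4n$.
   Context: $\mathbb{Z}_n$ is the integers modulo $n$; Lee weight of $\mathbf{u}\in\mathbb{Z}_n^2$ is $\sum_i\min\{u_i,n-u_i\}$, Lee distance $d_L(\mathbf{u},\mathbf{v})=\mathrm{wt}_L(\mathbf{u}-\mathbf{v})$. A linear code is a submodule of $\mathbb{Z}_n^2$, with generator matrix whose rows form a minimal spanning set. A code with minimum Lee distance $d$ is perfect if, with $t=\lfloor(d-1)/2\rfloor$, the Lee balls $\mathcal{B}_t(\mathbf{c})$ around codewords cover $\mathbb{Z}_n^2$; $t$-error-correcting means $d\ge2t+1$. For $n=2t^2+2t+1$ such a code has $n$ codewords $\mathbf{c}_1,\dots,\mathbf{c}_n$, and the palette grid $\mathcal{I}_\mathcal{C}$ is the $n\times n$ array (rows/columns indexed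 by $\mathbb{Z}_n$) with entry $i$ at each position $(x,y)\in\mathcal{B}_t(\mathbf{c}_i)$. Two $n\times n$ arrays over $n$-sets are orthogonal if all $n^2$ ordered pairs of corresponding entries are distinct. A perfect Sudoku grid with respect to $\mathcal{C}$ is a Latin square of order $n$ on $[n]=\{1,\dots,n\}$ orthogonal to $\mathcal{I}_\mathcal{C}$. Relabeling: $S_1\sim S_2$ iff there is a bijection $\sigma:[n]\to[n]$ with $\sigma((S_1)_{i,j})=(S_2)_{i,j}$ for all $i,j$. Maps on arrays (indices mod $n$): $(r(A))_{i,j}=A_{n-1-j,i}$, $(\tau_1(A))_{i,j}=A_{i-1,j}$, $(\tau_2(A))_{i,j}=A_{i,j-1}$; the generated group acts by $\varphi\cdot A=\varphi(A)$. Elements of $\mathcal{G}_\mathcal{S}$ map $\mathcal{S}$ into $\mathcal{S}$ and commute with relabeling, so $\mathcal{G}_\mathcal{S}$ acts on $\bar{\mathcal{S}}$. *)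

(* Defs.v *)
From HB Require Import structures.
From mathcomp Require Import all_boot all_order all_fingroup all_algebra.
From mathcomp Require Import ring.
Set Implicit Arguments. Unset Strict Implicit. Unset Printing Implicit Defensive.
Import GRing.Theory.
Local Open Scope ring_scope.

Section Sudoku.
Variable n : nat.

Definition pt := ('Z_n * 'Z_n)%type.

Definition leew1 (u : 'Z_n) : nat := minn (val u) (n - val u).
Definition leew (u : pt) : nat := (leew1 u.1 + leew1 u.2)%N.
Definition leed (u v : pt) : nat := leew (u.1 - v.1, u.2 - v.2).

Definition ball (t : nat) (c : pt) : {set pt} := [set u | (leed u c <= t)%N].

Definition lin_code (a b : 'Z_n) : {set pt} := [set (k * a, k * b) | k : 'Z_n].
Definition translate (x : pt) (C0 : {set pt}) : {set pt} :=
  [set (x.1 + c.1, x.2 + c.2) | c in C0].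

Definition min_lee_dist (C : {set pt}) (d : nat) : Prop :=
  (exists c, exists c', [/\ c \in C, c' \in C, c != c' & leed c c' = d]) /\
  (forall c c', c \in C -> c' \in C -> c != c' -> (d <= leed c c')%N).

Definition perfect_code (C : {set pt}) : Prop :=
  exists d, min_lee_dist C d /\
    forall u : pt, exists2 c, c \in C & u \in ball (d.-1 %/ 2) c.

Definition t_error_correcting (C : {set pt}) (t : nat) : Prop :=
  exists d, min_lee_dist C d /\ (2 * t + 1 <= d)%N.

(* n x n arrays indexed by Z_n x Z_n, entries in an n-set (represented by Z_n) *)
Definition arr := {ffun pt -> 'Z_n}.

(* palette grid for the enumeration e (c_i = e i) of the codewords *)
Definition palette (t : nat) (e : 'Z_n -> pt) : arr :=
  [ffun p => odflt 0 [pick i | p \in ball t (e i)]].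

Definition latin (A : arr) : bool :=
  [forall i, injectiveb (fun j => A (i, j))] &&
  [forall j, injectiveb (fun i => A (i, j))].

Definition orthogonal (A B : arr) : bool :=
  injectiveb (fun p : pt => (A p, B p)).

Definition perfect_sudoku (t : nat) (e : 'Z_n -> pt) (A : arr) : bool :=
  latin A && orthogonal A (palette t e).

Definition relabel_class (A : arr) : {set arr} :=
  [set B : arr | [exists s : {perm 'Z_n}, [forall p, s (A p) == B p]]].

Definition rot_fun (A : arr) : arr := [ffun p : pt => A (-1 - p.2, p.1)].
Definition tau1_fun (A : arr) : arr := [ffun p : pt => A (p.1 - 1, p.2)].
Definition tau2_fun (A : arr) : arr := [ffun p : pt => A (p.1, p.2 - 1)].

Lemma rot_inj : injective rot_fun.
Proof.
move=> A B /ffunP H; apply/ffunP => -[i j].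
have := H (j, -1 - i); rewrite !ffunE /=.
by have -> : -1 - (-1 - i) = i :> 'Z_n by ring.
Qed.

Lemma tau1_inj : injective tau1_fun.
Proof.
move=> A B /ffunP H; apply/ffunP => -[i j].
have := H (i + 1, j); rewrite !ffunE /=.
by have -> : i + 1 - 1 = i :> 'Z_n by ring.
Qed.

Lemma tau2_inj : injective tau2_fun.
Proof.
move=> A B /ffunP H; apply/ffunP => -[i j].
have := H (i, j + 1); rewrite !ffunE /=.
by have -> : j + 1 - 1 = j :> 'Z_n by ring.
Qed.

Definition rot : {perm arr} := perm rot_inj.
Definition tau1 : {perm arr} := perm tau1_inj.
Definition tau2 : {perm arr} := perm tau2_inj.

(* NB: in {perm _}, (s * t) x = t (s x); so the function composition
   tau2^k o tau1^m o r is written r * tau1^+m * tau2^+k. *)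
Definition GS (a b : 'Z_n) (x : pt) : {group {perm arr}} :=
  <<[set (rot * tau1 ^+ val (x.1 - x.2) * tau2 ^+ val (x.1 + x.2 + 1))%g ;
         (tau1 ^+ val a * tau2 ^+ val b)%g]>>%G.

End Sudoku.

(* Main.v *)
Require Import Defs.
From mathcomp Require Import all_boot all_order all_fingroup all_algebra.
From mathcomp Require Import zify ring cyclic.
Local Open Scope ring_scope.

Module GeoM.
Import GRing.Theory Num.Theory.

Section Geo.
Variable r : int.
Hypothesis r1 : 1 <= r.
Variable P : int -> int -> Prop.
Hypothesis Psub : forall x y u v, P x y -> P u v -> P (x - u) (y - v).
Hypothesis Padd : forall x y u v, P x y -> P u v -> P (x + u) (y + v).
Hypothesis Pmin : forall x y, P x y -> (x != 0) || (y != 0) -> 2 * r + 1 <= `|x| + `|y|.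
Hypothesis Pcov : forall x y, exists u v, P u v /\ `|x - u| + `|y - v| <= r.

Lemma Pmin' {x y} : P x y -> x = 0 /\ y = 0 \/ 2 * r + 1 <= `|x| + `|y|.
Proof.
move=> H; case: (boolP ((x != 0) || (y != 0))) => [/(Pmin _ _ H)|]; first by right.
by rewrite negb_or !negbK => /andP[/eqP -> /eqP ->]; left.
Qed.

Lemma shell_half u1 v1 : P u1 v1 -> `|r + 1 - u1| + `|v1| <= r -> 0 <= v1 -> P (r+1) r.
Proof.
move=> H1 c1 v1p.
have [[e1 e2]|n1] := Pmin' H1; first by exfalso; clear -c1 e1 e2 r1; lia.
have f1 : r + 1 <= u1 /\ u1 + v1 = 2 * r + 1 by clear -c1 n1 v1p r1; lia.
clear c1 n1.
have [i0|i1] : u1 = r + 1 \/ r + 2 <= u1 by lia.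
  have ev : v1 = r by clear -i0 f1; lia.
  by rewrite -i0 -ev.
have [u3 [v3 [H3 c3]]] := Pcov (u1 - r - 1) (2 * r + 2 - u1).
have [[e1 e2]|n3] := Pmin' H3; first by exfalso; clear -c3 e1 e2 r1 f1; lia.
have f3 : u1 - r - 1 <= u3 /\ 2 * r + 2 - u1 <= v3 /\ u3 + v3 = 2 * r + 1 /\ u3 <= u1 - 1.
  by clear -c3 n3 f1 i1 r1 v1p; lia.
clear c3 n3.
have [[e1 e2]|n13] := Pmin' (Psub _ _ _ _ H1 H3); first by exfalso; clear -f1 f3 e1 e2 r1 v1p; lia.
have e3 : u3 = u1 - r - 1 /\ v3 = 3 * r + 2 - u1 by clear -f1 f3 n13 r1 i1 v1p; lia.
clear n13 f3.
have [u4 [v4 [H4 c4]]] := Pcov r (-1).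
have [[e1 e2]|n4] := Pmin' H4; first by exfalso; clear -c4 e1 e2 r1; lia.
have f4 : r <= u4 /\ v4 <= -1 /\ u4 - v4 = 2 * r + 1 /\ u4 <= 2 * r by clear -c4 n4 r1; lia.
clear c4 n4.
have [[e1 e2]|n14] := Pmin' (Psub _ _ _ _ H1 H4); first by exfalso; clear -f1 f4 e1 e2 r1 v1p; lia.
have e4 : u4 = r /\ v4 = - r - 1 by clear -f1 f4 n14 r1 i1 v1p; lia.
clear n14 f4.
have [[e5 e6]|n5] := Pmin' (Padd _ _ _ _ H3 H4).
  by clear -e3 e4 f1 i1 r1 e5 e6; lia.
by clear -e3 e4 f1 i1 r1 n5 v1p; lia.
Qed.
End Geo.

Definition good (r : int) (P : int -> int -> Prop) :=
  [/\ 1 <= r, (forall x y u v, P x y -> P u v -> P (x - u) (y - v)),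
      (forall x y u v, P x y -> P u v -> P (x + u) (y + v)),
      (forall x y, P x y -> (x != 0) || (y != 0) -> 2 * r + 1 <= `|x| + `|y|) &
      (forall x y, exists u v, P u v /\ `|x - u| + `|y - v| <= r)].

Lemma Peq (P : int -> int -> Prop) a b a' b' : P a b -> a = a' -> b = b' -> P a' b'.
Proof. by move=> ? <- <-. Qed.
Arguments Peq {P a b a' b'}.

Lemma good_mirror r P : good r P -> good r (fun x y => P x (- y)).
Proof.
case=> r1 Ps Pa Pm Pc; split => //.
- move=> x y u v H1 H2 /=; apply: (Peq (Ps _ _ _ _ H1 H2)) => //; lia.
- move=> x y u v H1 H2 /=; apply: (Peq (Pa _ _ _ _ H1 H2)) => //; lia.
- move=> x y H h; have := Pm _ _ H; rewrite oppr_eq0 h => /(_ isT); lia.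
- move=> x y; have [u [v [H c]]] := Pc x (- y); exists u, (- v); split => /=.
    by apply: (Peq H) => //; lia.
  lia.
Qed.

Lemma good_swap r P : good r P -> good r (fun x y => P y x).
Proof.
case=> r1 Ps Pa Pm Pc; split => //.
- move=> x y u v H1 H2; exact: (Ps _ _ _ _ H1 H2).
- move=> x y u v H1 H2; exact: (Pa _ _ _ _ H1 H2).
- move=> x y H h; have := Pm _ _ H; rewrite orbC h => /(_ isT); lia.
- move=> x y; have [u [v [H c]]] := Pc y x; exists v, u; split => //; lia.
Qed.

Lemma good_rot r P : good r P -> good r (fun x y => P (- y) x).
Proof.
case=> r1 Ps Pa Pm Pc; split => //.
- move=> x y u v H1 H2 /=; apply: (Peq (Ps _ _ _ _ H1 H2)) => //; lia.
- move=> x y u v H1 H2 /=; apply: (Peq (Pa _ _ _ _ H1 H2)) => //; lia.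
- move=> x y H h; have := Pm _ _ H; rewrite oppr_eq0 orbC h => /(_ isT); lia.
- move=> x y; have [u [v [H c]]] := Pc (- y) x; exists v, (- u); split => /=.
    by apply: (Peq H) => //; lia.
  lia.
Qed.

Arguments good_mirror {r P}.
Arguments good_swap {r P}.
Arguments good_rot {r P}.

Lemma good_min r P x y : good r P -> P x y -> x = 0 /\ y = 0 \/ 2 * r + 1 <= `|x| + `|y|.
Proof. by case=> r1 Ps Pa Pm Pc; apply: Pmin'. Qed.

Arguments good_min {r P x y}.

Lemma shell r P : good r P -> P (r + 1) r \/ P (r + 1) (- r).
Proof.
move=> G; have G' := G; case: G' => r1 Ps Pa Pm Pc.
have [u1 [v1 [H1 c1]]] := Pc (r + 1) 0.
have [v1p|v1n] : 0 <= v1 \/ v1 <= 0 by lia.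
  left; apply: (@shell_half r r1 P Ps Pa Pm Pc u1 v1 H1) => //; lia.
right; case: (good_mirror G) => _ Ps' Pa' Pm' Pc'.
apply: (@shell_half r r1 _ Ps' Pa' Pm' Pc' u1 (- v1)); last lia.
  by rewrite opprK.
lia.
Qed.

Lemma step (r x y : int) : 1 <= r -> r + 1 <= `|x| + `|y| ->
  [\/ `|x - (r + 1)| + `|y - r| < `|x| + `|y|,
       `|x + (r + 1)| + `|y + r| < `|x| + `|y|,
       `|x + r| + `|y - (r + 1)| < `|x| + `|y| |
       `|x - r| + `|y + (r + 1)| < `|x| + `|y| ].
Proof.
move=> r1 h.
have [[x0 y0]|[[x0 y0]|[[x0 y0]|[x0 y0]]]] :
  (0 <= x /\ 0 <= y) \/ (x <= 0 /\ 0 <= y) \/ (x <= 0 /\ y <= 0) \/ (0 <= x /\ y <= 0) by lia.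
- have [yb|yb] : r + 1 <= y \/ y <= r by lia.
    by constructor 3; lia.
  by constructor 1; lia.
- have [yb|yb] : r + 1 <= - x \/ - x <= r by lia.
    by constructor 2; lia.
  by constructor 3; lia.
- have [yb|yb] : r + 1 <= - y \/ - y <= r by lia.
    by constructor 4; lia.
  by constructor 2; lia.
- have [yb|yb] : r + 1 <= x \/ x <= r by lia.
    by constructor 1; lia.
  by constructor 4; lia.
Qed.

Lemma descentA r P : good r P -> P (r + 1) r -> P (- r) (r + 1) ->
  forall x y, P x y -> P (- y) x.
Proof.
move=> G hA hB; have G' := G; case: G' => r1 Ps Pa Pm Pc.
pose S x y := P x y /\ P (- y) x.
have S0 : S 0 0.
  split; apply: (Peq (Ps _ _ _ _ hA hA)); lia.
have SsA : forall x y, S x y -> S (x - (r + 1)) (y - r).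
  move=> x y [h1 h2]; split; first exact: Ps.
  apply: (Peq (Ps _ _ _ _ h2 hB)); lia.
have SaA : forall x y, S x y -> S (x + (r + 1)) (y + r).
  move=> x y [h1 h2]; split; first exact: Pa.
  apply: (Peq (Pa _ _ _ _ h2 hB)); lia.
have SsB : forall x y, S x y -> S (x + r) (y - (r + 1)).
  move=> x y [h1 h2]; split; first by apply: (Peq (Ps _ _ _ _ h1 hB)); lia.
  apply: (Peq (Pa _ _ _ _ h2 hA)); lia.
have SaB : forall x y, S x y -> S (x - r) (y + (r + 1)).
  move=> x y [h1 h2]; split; first by apply: (Peq (Pa _ _ _ _ h1 hB)); lia.
  apply: (Peq (Ps _ _ _ _ h2 hA)); lia.
have claim : forall (m : nat) x y, `|x| + `|y| <= m%:Z ->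
    exists u v, S u v /\ `|x - u| + `|y - v| <= r.
  elim=> [|m IH] x y h.
    by exists 0, 0; split => //; lia.
  have [small|big] : `|x| + `|y| <= r \/ r + 1 <= `|x| + `|y| by lia.
    by exists 0, 0; split => //; lia.
  case: (@step r x y r1 big) => hs.
  - have [u [v [Su c]]] := IH (x - (r + 1)) (y - r) ltac:(lia).
    exists (u + (r + 1)), (v + r); split; last lia.
    apply: (Peq (SaA _ _ Su)); lia.
  - have [u [v [Su c]]] := IH (x + (r + 1)) (y + r) ltac:(lia).
    exists (u - (r + 1)), (v - r); split; last lia.
    apply: (Peq (SsA _ _ Su)); lia.
  - have [u [v [Su c]]] := IH (x + r) (y - (r + 1)) ltac:(lia).
    exists (u - r), (v + (r + 1)); split; last lia.
    apply: (Peq (SaB _ _ Su)); lia.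
  - have [u [v [Su c]]] := IH (x - r) (y + (r + 1)) ltac:(lia).
    exists (u + r), (v - (r + 1)); split; last lia.
    apply: (Peq (SsB _ _ Su)); lia.
move=> x y Pxy.
have [u [v [[Su1 Su2] c]]] := claim (absz x + absz y)%N x y ltac:(lia).
have [[e1 e2]|n] := good_min G (Ps _ _ _ _ Pxy Su1); last lia.
apply: (Peq Su2); lia.
Qed.

Arguments descentA {r P}.
Arguments shell {r P}.

Lemma rotinv r P : good r P -> forall x y, P x y -> P y (- x).
Proof.
move=> G; have G' := G; case: G' => r1 Ps Pa Pm Pc.
have [h1|h1] := shell G; have [h2|h2] := shell (good_rot G).
- have R := descentA G h1 h2.
  move=> x y H; have := R _ _ (R _ _ (R _ _ H)).
  by rewrite !opprK.
- have h3 : P r (r + 1) by move: h2; rewrite /= opprK.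
  have [[e1 e2]|n] := good_min G (Ps _ _ _ _ h1 h3); lia.
- have [[e1 e2]|n] := good_min G (Pa _ _ _ _ h1 h2); lia.
- have h3 : P r (r + 1) by move: h2; rewrite /= opprK.
  have R := descentA (good_swap G) h3 h1.
  by move=> x y H; exact: (R y x H).
Qed.

End GeoM.
Import GeoM.

Module BridgeM.
Set Implicit Arguments. Unset Strict Implicit. Unset Printing Implicit Defensive.
Import GRing.Theory Num.Theory.

Section Bridge.
Variable n : nat.
Hypothesis n1 : (1 < n)%N.

Definition zn (z : int) : 'Z_n := z%:~R.

Lemma valZ (v : 'Z_n) : (val v < n)%N.
Proof. by case: v => m hm /=; rewrite -(Zp_cast n1). Qed.

Lemma zn_nat (m : nat) : zn m%:Z = m%:R.
Proof. by rewrite /zn pmulrn. Qed.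

Lemma zn_val (v : 'Z_n) : zn (val v)%:Z = v.
Proof. by rewrite zn_nat natr_Zp. Qed.

Lemma znD x y : zn (x + y) = zn x + zn y.
Proof. by rewrite /zn intrD. Qed.

Lemma znN x : zn (- x) = - zn x.
Proof. by rewrite /zn mulrNz. Qed.

Lemma znB x y : zn (x - y) = zn x - zn y.
Proof. by rewrite znD znN. Qed.

Lemma n_eq0 : (n%:R : 'Z_n) = 0.
Proof. exact: pchar_Zp. Qed.

Lemma val_zn z : ((val (zn z))%:Z = (z %% n)%Z).
Proof.
have n0 : (n%:Z != 0) by lia.
rewrite {1}(divz_eq z n) znD /zn intrM.
have -> : (n%:Z)%:~R = (n%:R : 'Z_n) by rewrite pmulrn.
rewrite n_eq0 mulr0 add0r.
have m0 := modz_ge0 z n0.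
have m1 : (z %% n)%Z < n by apply: ltz_pmod; lia.
have -> : (z %% n)%Z = (absz (z %% n)%Z)%:Z by rewrite gez0_abs.
have -> : ((absz (z %% n)%Z)%:Z)%:~R = ((absz (z %% n)%Z)%:R : 'Z_n) by rewrite pmulrn.
have h := val_Zp_nat n1 `|(z %% n)%Z|%N.
rewrite /= in h *; rewrite h modn_small //; lia.
Qed.

Lemma leew1_zn z : ((leew1 (zn z))%:Z <= `|z|).
Proof.
have n0 : (n%:Z != 0) by lia.
have v := val_zn z.
have m0 := modz_ge0 z n0.
have m1 : (z %% n)%Z < n by apply: ltz_pmod; lia.
have e := divz_eq z n.
set q := (z %/ n)%Z in e.
have [q0|q0] : 0 <= q \/ q <= -1 by lia.
  have : 0 <= q * n by apply: mulr_ge0 => //.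
  rewrite /leew1; lia.
have : q * n <= - n%:Z.
  have : (q + 1) * n <= 0 by apply: mulr_le0_ge0; lia.
  rewrite mulrDl mul1r; lia.
rewrite /leew1; lia.
Qed.

Lemma zn_lift (v : 'Z_n) : exists z, zn z = v /\ `|z| = (leew1 v)%:Z.
Proof.
have vn := valZ v.
have [h|h] := leqP (val v) (n - val v).
  exists (val v)%:Z; rewrite zn_val /leew1; split => //; lia.
exists ((val v)%:Z - n%:Z); rewrite znB zn_val zn_nat n_eq0 subr0 /leew1; split => //; lia.
Qed.

Lemma zn0 z : zn z = 0 -> z = 0 \/ n%:Z <= `|z|.
Proof.
move=> h; have := val_zn z; rewrite h /= => e.
have ez := divz_eq z n.
set q := (z %/ n)%Z in ez.
rewrite -e addr0 in ez.
have [e0|q0] := eqVneq q 0; first by left; rewrite ez e0 mul0r.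
right; rewrite ez normrM.
have : 1 <= `|q| by lia.
have : 0 <= n%:Z by [].
nia.
Qed.

Lemma leew1_le (v : 'Z_n) : (2 * leew1 v <= n)%N.
Proof. have := valZ v; rewrite /leew1; lia. Qed.

Lemma leew_le (v : pt n) : (leew v <= n)%N.
Proof. rewrite /leew; have := leew1_le v.1; have := leew1_le v.2; lia. Qed.

End Bridge.

End BridgeM.
Import BridgeM.

Module CodeM.
Set Implicit Arguments. Unset Strict Implicit. Unset Printing Implicit Defensive.
Import GRing.Theory Num.Theory.

Lemma code_rot (n t : nat) (n1 : (1 < n)%N) (Ht : (1 <= t)%N) (a b : 'Z_n)
  (Hperf : perfect_code (lin_code a b))
  (Hcorr : t_error_correcting (lin_code a b) t) :
  exists k : 'Z_n, k * a = b /\ k * b = - a.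
Proof.
have [d [[[c [c' [cC c'C cc' cd]]] dmin] d2]] := Hcorr.
have [d' [[[e [e' [eC e'C ee' ed]]] d'min] cov]] := Hperf.
have dd : d' = d.
  have h1 := d'min _ _ cC c'C cc'; have h2 := dmin _ _ eC e'C ee'.
  rewrite cd in h1; rewrite ed in h2; lia.
rewrite dd in cov.
have dn : (d <= n)%N.
  by rewrite -cd; apply: leew_le.
set r := (d.-1 %/ 2)%N in cov.
have r1 : (1 <= r)%N by rewrite /r; lia.
have r2 : (2 * r + 1 <= d)%N by rewrite /r; lia.
have C0 : ((0 : 'Z_n), (0 : 'Z_n)) \in lin_code a b.
  by apply/imsetP; exists 0 => //; rewrite !mul0r.
pose P (x y : int) := (zn n x, zn n y) \in lin_code a b.
have G : good r%:Z P.
  split.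
  - lia.
  - move=> x y u v /imsetP [k _ [e1 e2]] /imsetP [k' _ [e3 e4]].
    apply/imsetP; exists (k - k') => //.
    by rewrite !znB e1 e2 e3 e4 !mulrBl.
  - move=> x y u v /imsetP [k _ [e1 e2]] /imsetP [k' _ [e3 e4]].
    apply/imsetP; exists (k + k') => //.
    by rewrite !znD e1 e2 e3 e4 !mulrDl.
  - move=> x y Pxy h.
    have [z0|nz] := boolP ((zn n x == 0) && (zn n y == 0)).
      case/andP: z0 => /eqP /(zn0 n1) hx /eqP /(zn0 n1) hy.
      lia.
    have ne : (zn n x, zn n y) != (0, 0).
      apply: contra nz => /eqP [-> ->]; by rewrite !eqxx.
    have := dmin _ _ Pxy C0 ne.
    rewrite /leed /leew /= !subr0.
    have := leew1_zn n1 x; have := leew1_zn n1 y.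
    move=> h1 h2 h3; clear -h1 h2 h3 r2; lia.
  - move=> x y.
    have [cw cwC] := cov (zn n x, zn n y).
    rewrite inE /leed /leew /= => hb.
    have [w1 [ew1 nw1]] := zn_lift n1 (zn n x - cw.1).
    have [w2 [ew2 nw2]] := zn_lift n1 (zn n y - cw.2).
    have h : `|w1| + `|w2| <= r%:Z by rewrite nw1 nw2 -PoszD lez_nat.
    exists (x - w1), (y - w2); split; last by clear -h; lia.
    rewrite /P !znB ew1 ew2 !subKr.
    by move: cwC; case: (cw) => ? ?.
have R := @rotinv _ _ G.
have Pab : P (val a)%:Z (val b)%:Z.
  by rewrite /P !zn_val //; apply/imsetP; exists 1 => //; rewrite !mul1r.
have := R _ _ Pab; rewrite /P znN !zn_val // => /imsetP [k _ ek].
by exists k; split; [exact: (esym (congr1 fst ek)) | exact: (esym (congr1 snd ek))].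
Qed.

End CodeM.
Import CodeM.

Module GrpM.
Set Implicit Arguments. Unset Strict Implicit. Unset Printing Implicit Defensive.
Import GRing.Theory.

Section Grp.
Variable n : nat.
Hypothesis n1 : (1 < n)%N.

Definition relab (s : {perm 'Z_n}) (B : arr n) : arr n := [ffun p => s (B p)].

Lemma rotE (B : arr n) : Defs.rot n B = [ffun p : pt n => B (-1 - p.2, p.1)].
Proof. by rewrite permE. Qed.

Lemma tau1X m (B : arr n) : (tau1 n ^+ m)%g B = [ffun p : pt n => B (p.1 - m%:R, p.2)].
Proof.
elim: m B => [|m IH] B.
  by rewrite expg0 perm1; apply/ffunP => -[i j]; rewrite ffunE /= subr0.
rewrite expgSr permM permE; apply/ffunP => -[i j]; rewrite /tau1_fun !ffunE IH ffunE /=.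
by congr (B (_, _)); rewrite mulrS; ring.
Qed.

Lemma tau2X m (B : arr n) : (tau2 n ^+ m)%g B = [ffun p : pt n => B (p.1, p.2 - m%:R)].
Proof.
elim: m B => [|m IH] B.
  by rewrite expg0 perm1; apply/ffunP => -[i j]; rewrite ffunE /= subr0.
rewrite expgSr permM permE; apply/ffunP => -[i j]; rewrite /tau2_fun !ffunE IH ffunE /=.
by congr (B (_, _)); rewrite mulrS; ring.
Qed.

Definition sgm (M K : nat) : {perm arr n} := (Defs.rot n * tau1 n ^+ M * tau2 n ^+ K)%g.
Definition tau (A Bb : nat) : {perm arr n} := (tau1 n ^+ A * tau2 n ^+ Bb)%g.

Lemma sgmE M K (B : arr n) :
  sgm M K B = [ffun p : pt n => B (-1 - (p.2 - K%:R), p.1 - M%:R)].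
Proof.
rewrite /sgm !permM tau2X tau1X rotE; apply/ffunP => -[i j]; by rewrite !ffunE.
Qed.

Lemma tauE A Bb (B : arr n) :
  tau A Bb B = [ffun p : pt n => B (p.1 - A%:R, p.2 - Bb%:R)].
Proof.
rewrite /tau !permM tau2X tau1X; apply/ffunP => -[i j]; by rewrite !ffunE.
Qed.

Lemma tauX A Bb j (B : arr n) :
  (tau A Bb ^+ j)%g B = [ffun p : pt n => B (p.1 - j%:R * A%:R, p.2 - j%:R * Bb%:R)].
Proof.
elim: j B => [|j IH] B.
  by rewrite expg0 perm1; apply/ffunP => -[i k]; rewrite ffunE /= !mul0r !subr0.
rewrite expgSr permM tauE; apply/ffunP => -[i k]; rewrite !ffunE IH ffunE /=.
by congr (B (_, _)); rewrite mulrS; ring.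
Qed.

Lemma sgm4 M K : (sgm M K ^+ 4)%g = 1%g.
Proof.
apply/permP => B; rewrite perm1 !expgSr expg0 mul1g !permM !tau2X !tau1X !rotE.
apply/ffunP => -[i j]; rewrite !ffunE /=; congr (B (_, _)); ring.
Qed.

Lemma tau_n A Bb : (tau A Bb ^+ n)%g = 1%g.
Proof.
apply/permP => B; rewrite perm1 tauX pchar_Zp // !mul0r.
by apply/ffunP => -[i j]; rewrite ffunE /= !subr0.
Qed.

Lemma sgm_tau M K (a b k : 'Z_n) : k * a = b -> k * b = - a ->
  (sgm M K * tau (val a) (val b) ^+ (val k) = tau (val a) (val b) * sgm M K)%g.
Proof.
move=> h1 h2; apply/permP => B; rewrite [LHS]permM [RHS]permM tauX tauE !sgmE.
apply/ffunP => -[i j]; rewrite !ffunE /= !natr_Zp h1 h2; congr (B (_, _)); ring.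
Qed.

Definition Qset := [set g : {perm arr n} | [forall s : {perm 'Z_n},
  [forall B : arr n, g (relab s B) == relab s (g B)]]].

Lemma QsetP (g : {perm arr n}) : reflect (forall s B, g (relab s B) = relab s (g B)) (g \in Qset).
Proof.
rewrite inE; apply: (iffP forallP) => [H s B|H s]; first by have /forallP/(_ B)/eqP := H s.
by apply/forallP => B; rewrite H.
Qed.

Lemma Qgroup : group_set Qset.
Proof.
apply/group_setP; split; first by apply/QsetP => s B; rewrite !perm1.
move=> g h /QsetP Hg /QsetP Hh; apply/QsetP => s B; by rewrite !permM Hg Hh.
Qed.

Lemma sgmQ M K : sgm M K \in Qset.
Proof. by apply/QsetP => s B; rewrite !sgmE; apply/ffunP => p; rewrite !ffunE. Qed.

Lemma tauQ A Bb : tau A Bb \in Qset.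
Proof. by apply/QsetP => s B; rewrite !tauE; apply/ffunP => p; rewrite !ffunE. Qed.

End Grp.

End GrpM.
Import GrpM.

Theorem mainTheorem3 (t n : nat) (Hn : n = (2 * t ^ 2 + 2 * t + 1)%N) (Ht : (1 <= t)%N)
  (a b : 'Z_n) (x : pt n)
  (Hab : (a, b) != (0, 0))
  (Hperf : perfect_code (lin_code a b))
  (Hcorr : t_error_correcting (lin_code a b) t)
  (e : 'Z_n -> pt n) (He_inj : injective e)
  (He_im : [set e i | i : 'Z_n] = translate x (lin_code a b))
  (A : arr n) (HA : perfect_sudoku t e A) :
  (#|[set relabel_class (g A) | g : {perm arr n} in GS a b x]| %| 4 * n)%N.
Proof.
have n1 : (1 < n)%N by rewrite Hn; nia.
have [k [hk1 hk2]] := code_rot n1 Ht Hperf Hcorr.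
set M := val (x.1 - x.2); set K := val (x.1 + x.2 + 1).
set s := sgm n M K; set tt := tau n (val a) (val b).
have comm : (s * tt ^+ (val k) = tt * s)%g by apply: sgm_tau.
have conj : (tt ^ s = tt ^+ (val k))%g by rewrite conjgE -comm mulKg.
have Nst : <[s]>%g \subset 'N(<[tt]>)%g.
  rewrite cycle_subG; apply/normP; apply/eqP.
  by rewrite eqEcard cardJg leqnn andbT -cycleJ conj cycle_subG mem_cycle.
have E : (GS a b x : {set {perm arr n}}) = (<[tt]> * <[s]>)%g.
  rewrite -norm_joinEr // joingC.
  by rewrite /cycle joing_idl joing_idr.
have QG : GS a b x \subset Qset n.
  have sub : [set s; tt] \subset Group (Qgroup n).
    apply/subsetP => g /set2P [] ->.
      exact: sgmQ.
    exact: tauQ.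
  have := gen_subG [set s; tt] (Group (Qgroup n)); rewrite sub => /idP h.
  exact: h.
have -> : [set relabel_class (g A) | g : {perm arr n} in GS a b x] =
          orbit ('P^*)%act (GS a b x) (relabel_class A).
  rewrite orbitE; apply: eq_in_imset => g gG /=.
  have /QsetP Hg := subsetP QG g gG.
  rewrite setactE; apply/setP => B; rewrite inE.
  apply/existsP/imsetP => [[u /forallP Hu]|[C]].
    exists (relab u A); first by rewrite inE; apply/existsP; exists u; apply/forallP => p; rewrite ffunE.
    rewrite [in RHS]/act /= apermE Hg; apply/ffunP => p; rewrite ffunE; exact/esym/eqP/Hu.
  rewrite inE => /existsP [u /forallP Hu] ->; exists u; apply/forallP => p.
  have -> : C = relab u A by apply/ffunP => q; rewrite ffunE; exact/esym/eqP/Hu.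
  by rewrite /act /= apermE Hg ffunE.
rewrite card_orbit; apply: dvdn_trans (dvdn_indexg _ _) _.
rewrite E; apply: (@dvdn_trans (#|<[tt]>%g| * #|<[s]>%g|)).
  by rewrite mul_cardG dvdn_mulr.
rewrite mulnC; apply: dvdn_mul.
  by rewrite order_dvdn sgm4.
by rewrite order_dvdn tau_n.
Qed.
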